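(* For each $\gamma\in\mathbb{R}$ let $\hat g_{+,\gamma}$ be any minimizer of $\hat h_{+,\gamma}$ over $\mathcal{F}$, and let $\epsilon_{\text{abs}}>0$. Then: (1) $\hat h_{+,\gamma}(\hat g_{+,\gamma})$ is monotonically increasing in $\gamma$; (2) $\hat e_{\text{orig}}(\hat g_{+,\gamma})$ is monotonically decreasing in $\gamma$ for $\gamma\le0$, and if $\epsilon_{\text{abs}}\ge\min_{f\in\mathcal{F}}\hat e_{\text{orig}}(f)$ then $\hat h_{+,0}(\hat g_{+,0})\ge0$ and $\hat e_{\text{orig}}(\hat g_{+,0})\le\epsilon_{\text{abs}}$; (3) the quantity $\left\{\frac{\hat h_{+,\gamma}(\hat g_{+,\gamma})}{\epsilon_{\text{abs}}}-1\right\}\gamma^{-1}$ is monotonically increasing in $\gamma$ over the range where $\hat e_{\text{orig}}(\hat g_{+,\gamma})\le\epsilon_{\text{abs}}$ and $\gamma<0$, and monotonically decreasing in $\gamma$ over the range where $\hat e_{\text{orig}}(\hat g_{+,\gamma})>\epsilon_{\text{abs}}$ and $\gamma<0$.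
   Context: Setting: $\mathcal{F}$ a set of prediction models, $L\ge0$ a loss, and a fixed observed sample $(\mathbf{y}_{[i]},\mathbf{X}_{1[i]},\mathbf{X}_{2[i]})$, $i=1,\dots,n$, $n\ge2$. $\hat e_{\text{orig}}(f)=\frac1n\sum_iL\{f,(\mathbf{y}_{[i]},\mathbf{X}_{1[i]},\mathbf{X}_{2[i]})\}$; $\hat e_{\text{switch}}(f)=\frac1{n(n-1)}\sum_i\sum_{j\ne i}L\{f,(\mathbf{y}_{[j]},\mathbf{X}_{1[i]},\mathbf{X}_{2[j]})\}$. For $\gamma\in\mathbb{R}$, $\hat h_{+,\gamma}(f):=\hat e_{\text{orig}}(f)+\gamma\hat e_{\text{switch}}(f)$. Standing assumptions: $\min_{f\in\mathcal{F}}\hat e_{\text{orig}}(f)>0$ and minimizers of $\hat h_{+,\gamma}$ over $\mathcal{F}$ exist for every $\gamma$. *)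

(* Defs.v *)
From mathcomp Require Import all_boot all_order all_algebra.
From mathcomp Require Import reals.
Set Implicit Arguments. Unset Strict Implicit. Unset Printing Implicit Defensive.
Import Order.TTheory GRing.Theory Num.Theory.
Local Open Scope ring_scope.

Section Risks.
Variables (R : realType) (M Y X1 X2 : Type) (n : nat).
Variable L : M -> Y * X1 * X2 -> R.
Variables (y : 'I_n -> Y) (x1 : 'I_n -> X1) (x2 : 'I_n -> X2).

Definition e_orig (f : M) : R :=
  (n%:R)^-1 * \sum_(i < n) L f (y i, x1 i, x2 i).

Definition e_switch (f : M) : R :=
  (n%:R * (n%:R - 1))^-1 *
    \sum_(i < n) \sum_(j < n | j != i) L f (y j, x1 i, x2 j).

Definition h_plus (gamma : R) (f : M) : R := e_orig f + gamma * e_switch f.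

End Risks.

(* Main.v *)
Require Import Defs.
From mathcomp Require Import all_boot all_order all_algebra.
From mathcomp Require Import reals.
From mathcomp Require Import ring lra.
Import Order.TTheory GRing.Theory Num.Theory.
Local Open Scope ring_scope.

Lemma q_inc (R : realType) (ea sa H1 H2 eps g1 g2 : R) :
  g1 <= g2 -> g2 < 0 -> 0 < eps -> ea <= eps ->
  H1 = ea + g1 * sa -> H2 <= ea + g2 * sa ->
  (H1 / eps - 1) * g1^-1 <= (H2 / eps - 1) * g2^-1.
Proof.
move=> h12 h2 he hea E1 E2.
have g1n : g1 < 0 by lra.
set u := eps^-1. set t1 := g1^-1. set t2 := g2^-1.
have hu : eps * u = 1 by rewrite /u mulfV // gt_eqF.
have ht1 : g1 * t1 = 1 by rewrite /t1 mulfV // lt_eqF.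
have ht2 : g2 * t2 = 1 by rewrite /t2 mulfV // lt_eqF.
have t2n : t2 < 0 by rewrite /t2 invr_lt0.
have t1n : t1 < 0 by rewrite /t1 invr_lt0.
have t21 : t2 <= t1.
  have p : 0 < t1 * t2 by rewrite nmulr_rgt0.
  have e : t1 - t2 = (t1 * t2) * (g2 - g1).
    rewrite mulrBr -mulrA (mulrC t2 g2) ht2 mulr1 (mulrC t1 t2) -mulrA (mulrC t1 g1) ht1 mulr1 //.
  have : 0 <= (t1 * t2) * (g2 - g1) by rewrite mulr_ge0 ?subr_ge0 // ltW.
  lra.
have up : 0 < u by rewrite /u invr_gt0.
have k1 : ea * u - 1 <= 0.
  have : ea * u <= eps * u by rewrite ler_pM2r.
  lra.
have LH : (H1 / eps - 1) * t1 = (ea * u - 1) * t1 + sa * u.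
  rewrite E1 -/u; transitivity ((ea * u - 1) * t1 + sa * u * (g1 * t1)); first by ring.
  by rewrite ht1 mulr1.
have RH : (ea * u + g2 * (sa * u) - 1) * t2 = (ea * u - 1) * t2 + sa * u.
  transitivity ((ea * u - 1) * t2 + sa * u * (g2 * t2)); first by ring.
  by rewrite ht2 mulr1.
have A : (ea * u + g2 * (sa * u) - 1) * t2 <= (H2 / eps - 1) * t2.
  rewrite ler_nM2r //. have : H2 * u <= (ea + g2 * sa) * u by rewrite ler_pM2r.
  rewrite -/u; lra.
have B : (ea * u - 1) * t1 <= (ea * u - 1) * t2 by rewrite ler_wnM2l.
rewrite LH -/u in A *; lra.
Qed.

Lemma q_dec (R : realType) (eb sb H1 H2 eps g1 g2 : R) :
  g1 <= g2 -> g2 < 0 -> 0 < eps -> eps < eb ->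
  H2 = eb + g2 * sb -> H1 <= eb + g1 * sb ->
  (H2 / eps - 1) * g2^-1 <= (H1 / eps - 1) * g1^-1.
Proof.
move=> h12 h2 he hea E1 E2.
have g1n : g1 < 0 by lra.
set u := eps^-1. set t1 := g1^-1. set t2 := g2^-1.
have hu : eps * u = 1 by rewrite /u mulfV // gt_eqF.
have ht1 : g1 * t1 = 1 by rewrite /t1 mulfV // lt_eqF.
have ht2 : g2 * t2 = 1 by rewrite /t2 mulfV // lt_eqF.
have t2n : t2 < 0 by rewrite /t2 invr_lt0.
have t1n : t1 < 0 by rewrite /t1 invr_lt0.
have t21 : t2 <= t1.
  have p : 0 < t1 * t2 by rewrite nmulr_rgt0.
  have e : t1 - t2 = (t1 * t2) * (g2 - g1).
    rewrite mulrBr -mulrA (mulrC t2 g2) ht2 mulr1 (mulrC t1 t2) -mulrA (mulrC t1 g1) ht1 mulr1 //.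
  have : 0 <= (t1 * t2) * (g2 - g1) by rewrite mulr_ge0 ?subr_ge0 // ltW.
  lra.
have up : 0 < u by rewrite /u invr_gt0.
have k1 : 0 <= eb * u - 1.
  have : eps * u <= eb * u by rewrite ler_pM2r; lra.
  lra.
have LH : (H2 / eps - 1) * t2 = (eb * u - 1) * t2 + sb * u.
  rewrite E1 -/u; transitivity ((eb * u - 1) * t2 + sb * u * (g2 * t2)); first by ring.
  by rewrite ht2 mulr1.
have RH : (eb * u + g1 * (sb * u) - 1) * t1 = (eb * u - 1) * t1 + sb * u.
  transitivity ((eb * u - 1) * t1 + sb * u * (g1 * t1)); first by ring.
  by rewrite ht1 mulr1.
have A : (eb * u + g1 * (sb * u) - 1) * t1 <= (H1 / eps - 1) * t1.
  rewrite ler_nM2r //. have : H1 * u <= (eb + g1 * sb) * u by rewrite ler_pM2r.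
  rewrite -/u; lra.
have B : (eb * u - 1) * t2 <= (eb * u - 1) * t1 by rewrite ler_wpM2l.
rewrite LH -/u in A *; lra.
Qed.

Theorem lemma20 (R : realType) (M Y X1 X2 : Type) (F : M -> Prop)
  (L : M -> Y * X1 * X2 -> R) (n : nat)
  (y : 'I_n -> Y) (x1 : 'I_n -> X1) (x2 : 'I_n -> X2)
  (emin : R) (g : R -> M) (eps_abs : R) :
  (1 < n)%N ->
  (forall f z, 0 <= L f z) ->
  (* emin = min_{f in F} e_orig(f), attained, and positive *)
  (exists2 f0, F f0 & e_orig L y x1 x2 f0 = emin) ->
  (forall f, F f -> emin <= e_orig L y x1 x2 f) ->
  0 < emin ->
  (* g gamma is (any) minimizer of h_{+,gamma} over F, for every gamma *)
  (forall gamma, F (g gamma) /\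
     forall f, F f -> h_plus L y x1 x2 gamma (g gamma) <= h_plus L y x1 x2 gamma f) ->
  0 < eps_abs ->
  let hg := fun gamma => h_plus L y x1 x2 gamma (g gamma) in
  let eg := fun gamma => e_orig L y x1 x2 (g gamma) in
  let q := fun gamma => (hg gamma / eps_abs - 1) * gamma^-1 in
  [/\ (* (1) *)
      (forall g1 g2, g1 <= g2 -> hg g1 <= hg g2),
      (* (2) *)
      (forall g1 g2, g1 <= g2 -> g2 <= 0 -> eg g2 <= eg g1) /\
      (emin <= eps_abs -> 0 <= hg 0 /\ eg 0 <= eps_abs),
      (* (3) increasing where eg <= eps_abs and gamma < 0 *)
      (forall g1 g2, g1 <= g2 -> g2 < 0 ->
         eg g1 <= eps_abs -> eg g2 <= eps_abs -> q g1 <= q g2)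
    & (* (3) decreasing where eg > eps_abs and gamma < 0 *)
      (forall g1 g2, g1 <= g2 -> g2 < 0 ->
         eps_abs < eg g1 -> eps_abs < eg g2 -> q g2 <= q g1)].
Proof.
move=> n1 L0 [f0 Ff0 Ef0] Emin emin0 Hg eps0 hg eg q.
set E := e_orig L y x1 x2. set S := e_switch L y x1 x2.
have hE : forall gm f, h_plus L y x1 x2 gm f = E f + gm * S f by [].
have E0 : forall f, 0 <= E f.
  move=> f; rewrite /E /e_orig mulr_ge0 ?invr_ge0 ?ler0n //.
  by apply: sumr_ge0 => i _.
have S0 : forall f, 0 <= S f.
  move=> f; rewrite /S /e_switch mulr_ge0 //; last first.
    by apply: sumr_ge0 => i _; apply: sumr_ge0 => j _.
  rewrite invr_ge0 mulr_ge0 ?ler0n // subr_ge0 ler1n; exact: ltnW.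
have Min : forall gm f, F f -> E (g gm) + gm * S (g gm) <= E f + gm * S f.
  by move=> gm f Ff; rewrite -!hE; apply: (proj2 (Hg gm)).
have Fg : forall gm, F (g gm) by move=> gm; apply: (proj1 (Hg gm)).
split.
- move=> g1 g2 h12; rewrite /hg !hE.
  have := Min g1 _ (Fg g2).
  have : g1 * S (g g2) <= g2 * S (g g2) by rewrite ler_wpM2r.
  lra.
- split.
  + move=> g1 g2 h12 h2; rewrite /eg -/E.
    have [->|ne] := eqVneq g1 g2; first by [].
    have lt : g1 < g2 by rewrite lt_neqAle ne h12.
    have H1 := Min g1 _ (Fg g2). have H2 := Min g2 _ (Fg g1).
    have d : S (g g2) <= S (g g1).
      have : (g2 - g1) * (S (g g1) - S (g g2)) >= 0 by lra.
      rewrite pmulr_rge0 ?subr_gt0 // subr_ge0 //.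
    have : g2 * (S (g g1) - S (g g2)) <= 0 by rewrite mulr_le0_ge0 // subr_ge0.
    lra.
  + move=> he; rewrite /hg /eg hE -/E mul0r addr0; split; first exact: E0.
    have := Min 0 _ Ff0. rewrite !mul0r !addr0 -/E in Ef0 *. lra.
- move=> g1 g2 h12 h2 e1 e2; rewrite /q /hg !hE.
  apply: (@q_inc R (E (g g1)) (S (g g1))) => //.
  exact: Min.
- move=> g1 g2 h12 h2 e1 e2; rewrite /q /hg !hE.
  apply: (@q_dec R (E (g g2)) (S (g g2))) => //.
  exact: Min.
Qed.
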